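(* Let $\theta>1$, $r\in(\theta^{-1},\theta^{-1/2}]$ and $\beta=\frac{1-r^2\theta}{r\theta}\max\big(\frac1{1-r},\frac1{r\theta-1}\big)$. Let $(P_1,\dots,P_n)$ be a random price sequence with values in $[1,\theta]$ and maximum $P^*$, and $Y$ a random prediction with values in $[1,\theta]$ (arbitrary joint law). Then \[ \frac{\mathbb{E}[\mathsf{A}^1_r(P,Y)]}{\mathbb{E}[P^*]}\ \ge\ \max\Big\{r,\ \frac1{r\theta}-\beta\,\frac{\mathbb{E}\big[P^*\,|P^*-Y|\big]}{\mathbb{E}[P^*]}\Big\}. \]
   Context: One-max search: fix $\theta>1$. Prices $p_1,\dots,p_n\in[1,\theta]$ are revealed one at a time; the algorithm receives at the start a prediction $y\in[1,\theta]$ of the maximum price. At each step it irrevocably accepts the current price (payoff = that price) or rejects it; if nothing is accepted the payoff is $1$. Let $\varphi_r(z)=\frac{r\theta-1}{1-r}+\frac{1-r^2\theta}{1-r}\cdot\frac{z}{r\theta}$ and $\Phi^1_r(z)=\max(r\theta,\varphi_r(z))$; $\mathsf{A}^1_r$ accepts the first price $p_i\ge\Phi^1_r(y)$, and $\mathsf{A}^1_r(P,Y)$ is its payoff on the realized prices and prediction. *)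

(* Defs.v *)
From HB Require Import structures.
From mathcomp Require Import all_boot all_order all_algebra.
From mathcomp Require Import all_classical all_reals all_analysis.
Set Implicit Arguments. Unset Strict Implicit. Unset Printing Implicit Defensive.
Import Order.TTheory GRing.Theory Num.Theory.
Local Open Scope ring_scope.

Section OneMax.
Variable R : realType.

Definition phi_r (theta r z : R) : R :=
  (r * theta - 1) / (1 - r) + (1 - r ^+ 2 * theta) / (1 - r) * (z / (r * theta)).

Definition Phi1 (theta r z : R) : R := Num.max (r * theta) (phi_r theta r z).

Fixpoint threshold_payoff (thr : R) (s : seq R) : R :=
  match s with
  | [::] => 1
  | x :: s' => if thr <= x then x else threshold_payoff thr s'
  end.

Definition A1 (theta r : R) (s : seq R) (y : R) : R :=
  threshold_payoff (Phi1 theta r y) s.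

Definition beta1 (theta r : R) : R :=
  (1 - r ^+ 2 * theta) / (r * theta) * Num.max (1 - r)^-1 (r * theta - 1)^-1.

End OneMax.

(* Main.v *)
Require Import Defs.
From HB Require Import structures.
From mathcomp Require Import all_boot all_order all_algebra.
From mathcomp Require Import all_classical all_reals all_analysis.
From mathcomp Require Import ring lra measurable_realfun.
Import Order.TTheory GRing.Theory Num.Theory.
Local Open Scope ring_scope.
Lemma pw {R : realType} {th r y m a : R} :
  1 < th -> th^-1 < r -> r ^+ 2 * th <= 1 -> 1 <= m <= th -> 1 <= y <= th ->
  ((a = 1 /\ m < Phi1 th r y) \/ Phi1 th r y <= a) ->
  r * m <= a /\ m / (r * th) - beta1 th r * (m * `|m - y|) <= a.
Proof.
move=> h1 hr hr2 /andP[m1 mt] /andP[y1 yt] hcase.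
have t0 : 0 < th by apply: lt_trans h1.
have r0 : 0 < r by apply: lt_trans hr; rewrite invr_gt0.
have u1 : 1 < r * th.
  have := @mulVf _ th (lt0r_neq0 t0); nra.
have r1 : r < 1 by rewrite expr2 in hr2; nra.
have rn : r != 0 by rewrite gt_eqF.
have tn : th != 0 by rewrite gt_eqF.
have r1n : 1 - r != 0 by rewrite subr_eq0 eq_sym lt_eqF.
have un : r * th != 0 by rewrite gt_eqF // (lt_trans _ u1).
have u1n : r * th - 1 != 0 by rewrite subr_eq0 gt_eqF.
set u := r * th in u1 un u1n *.
have c0 : 0 <= (1 - r ^+ 2 * th) / (1 - r).
  by apply: divr_ge0; rewrite subr_ge0 //; apply: ltW.
have K0 : 0 <= (u - 1) / (1 - r).
  by apply: divr_ge0; rewrite subr_ge0; apply: ltW.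
have phiE : phi_r th r y = (u - 1) / (1 - r) + (1 - r ^+ 2 * th) / (1 - r) * (y / u) by [].
have phitop : phi_r th r y <= r^-1.
  have -> : r^-1 = phi_r th r y + (1 - r ^+ 2 * th) / (1 - r) * ((th - y) / u).
    by rewrite phiE /u; field; rewrite ?rn ?tn ?r1n.
  by rewrite lerDl mulr_ge0 // divr_ge0 ?subr_ge0 // ltW // (lt_trans _ u1).
have utop : u <= r^-1.
  have -> : r^-1 = u + (1 - r ^+ 2 * th) / r by rewrite /u; field.
  by rewrite lerDl divr_ge0 ?subr_ge0 // ltW.
have ttop : Phi1 th r y <= r^-1 by rewrite /Phi1 ge_max utop phitop.
have tu : u <= Phi1 th r y by rewrite /Phi1 le_max lexx.
have tphi : phi_r th r y <= Phi1 th r y by rewrite /Phi1 le_max lexx orbT.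
have bc : (1 - r ^+ 2 * th) / (1 - r) / u <= beta1 th r.
  rewrite /beta1 -/u.
  have -> : (1 - r ^+ 2 * th) / (1 - r) / u = (1 - r ^+ 2 * th) / u * (1 - r)^-1.
    by field; rewrite ?r1n ?un.
  rewrite ler_wpM2l ?le_max ?lexx //; apply: divr_ge0; rewrite ?subr_ge0 //.
  by apply: ltW; apply: lt_trans u1.
have bK : (1 - r ^+ 2 * th) / (1 - r) / u <= (u - 1) / (1 - r) * beta1 th r.
  rewrite /beta1 -/u.
  have -> : (1 - r ^+ 2 * th) / (1 - r) / u =
     (u - 1) / (1 - r) * ((1 - r ^+ 2 * th) / u * (u - 1)^-1).
    by field; rewrite ?r1n ?un ?u1n.
  rewrite ler_wpM2l // ler_wpM2l ?le_max ?lexx ?orbT //; apply: divr_ge0; rewrite ?subr_ge0 //.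
  by apply: ltW; apply: lt_trans u1.
have b0 : 0 <= beta1 th r by apply: le_trans bc; apply: divr_ge0; [lra | apply: ltW; apply: lt_trans u1].
have dev0 : 0 <= beta1 th r * (m * `|m - y|) by rewrite mulr_ge0 // mulr_ge0 // (le_trans _ m1).
have devm : beta1 th r * `|m - y| <= beta1 th r * (m * `|m - y|).
  by rewrite ler_wpM2l // ler_peMl.
have absy : y - m <= `|m - y| by rewrite distrC ler_norm.
set c := (1 - r ^+ 2 * th) / (1 - r) in c0 phiE phitop bc bK *.
set K := (u - 1) / (1 - r) in K0 phiE bK *.
set b := beta1 th r in bc bK b0 dev0 devm *.
set t := Phi1 th r y in hcase ttop tu tphi *.
case: hcase => [[-> mt'] | ta].
- split.
    have : r * m <= r * r^-1 by rewrite ler_wpM2l // ltW // (lt_le_trans mt').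
    by rewrite mulfV.
  have [mu|um] := leP m u.
    have : m / u <= 1 by rewrite ler_pdivrMr ?mul1r // (lt_trans _ u1).
    lra.
  have tphiE : t = phi_r th r y.
    have := lt_trans um mt'; rewrite /t /Phi1 lt_max ltxx /= => h.
    by rewrite max_r // ltW.
  have key : phi_r th r y - m = c * ((y - m) / u) - K * (m / u - 1).
    by rewrite phiE /c /K /u; field; rewrite tn rn r1n.
  have hcy : K * (m / u - 1) <= c * ((y - m) / u) by rewrite -subr_ge0 -key subr_ge0 -tphiE ltW.
  have u0 : 0 < u by apply: lt_trans u1.
  have cu0 : 0 <= c / u by rewrite divr_ge0 // ltW.
  have e1 : c * ((y - m) / u) = c / u * (y - m) by field; rewrite un.
  have e2 : c / u * (y - m) <= c / u * `|m - y| by rewrite ler_wpM2l.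
  have e3 : c / u * `|m - y| <= K * b * `|m - y| by rewrite ler_wpM2r.
  have Kp : 0 < K by rewrite divr_gt0 // subr_gt0.
  have : K * (m / u - 1) <= K * (b * `|m - y|) by rewrite mulrA; lra.
  rewrite ler_pM2l // => h; lra.
- split.
    apply: le_trans ta; apply: le_trans tu; rewrite /u ler_wpM2l // ltW //.
  have u0 : 0 < u by apply: lt_trans u1.
  have cu0 : 0 <= c / u by rewrite divr_ge0 // ltW.
  have key : phi_r th r y - m / u = c / u * (y - m) + K * (1 - m / th).
    by rewrite phiE /c /K /u; field; rewrite tn rn r1n.
  have mth : 0 <= 1 - m / th by rewrite subr_ge0 ler_pdivrMr ?mul1r.
  have e0 : 0 <= K * (1 - m / th) by rewrite mulr_ge0.
  have e2 : c / u * (m - y) <= c / u * `|m - y| by rewrite ler_wpM2l // ler_norm.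
  have e3 : c / u * `|m - y| <= b * `|m - y| by rewrite ler_wpM2r.
  have e4 : c / u * (y - m) = - (c / u * (m - y)) by rewrite -mulrN opprB.
  lra.
Qed.

Lemma tp_cases {R : realType} (thr : R) (s : seq R) :
  (threshold_payoff thr s = 1 /\ all (fun x => x < thr) s) \/
  (thr <= threshold_payoff thr s /\ threshold_payoff thr s \in s).
Proof.
elim: s => [|x s IH] /=; first by left.
case: ifP => hx.
  by right; rewrite hx mem_head.
case: IH => [[-> ha]|[h1 h2]].
  by left; rewrite ltNge hx ha.
by right; rewrite h1 in_cons h2 orbT.
Qed.

Lemma int_bdd (R : realType) (d : measure_display) (T : measurableType d)
    (Pr : probability T R) {f : T -> R} {B : R} :
  measurable_fun setT f -> (forall x, `|f x| <= B) ->
  Pr.-integrable setT (EFin \o f).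
Proof.
move=> mf hB; apply: measurable_bounded_integrable => //.
  apply: (le_lt_trans _ (ltry (1:R))).
  by rewrite le_eqVlt; apply/orP; left; apply/eqP; exact: probability_setT.
exists B; split; first exact: num_real.
move=> M HM x _ /=; apply: le_trans (hB x) _; exact: ltW.
Qed.

Lemma meas_bigmax (R : realType) (d : measure_display) (T : measurableType d)
   (I : Type) {F : I -> T -> R} {s : seq I} :
  (forall i, measurable_fun setT (F i)) ->
  measurable_fun setT (fun w => \big[Num.max/1]_(i <- s) F i w).
Proof.
move=> mF; elim: s => [|i s IH].
  by under eq_fun do rewrite big_nil; exact: measurable_cst.
under eq_fun do rewrite big_cons.
exact: measurable_maxr.
Qed.

Lemma meas_tp (R : realType) (d : measure_display) (T : measurableType d)
   (I : Type) {F : I -> T -> R} {thr : T -> R} {s : seq I} :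
  (forall i, measurable_fun setT (F i)) -> measurable_fun setT thr ->
  measurable_fun setT (fun w => threshold_payoff (thr w) [seq F i w | i <- s]).
Proof.
move=> mF mt; elim: s => [|i s IH] /=.
  exact: measurable_cst.
apply: measurable_fun_ifT => //.
exact: measurable_fun_ler.
Qed.

Lemma int_bdd2 (R : realType) (d : measure_display) (T : measurableType d)
    (Pr : probability T R) {f : T -> R} {lo hi : R} :
  measurable_fun setT f -> (forall x, lo <= f x <= hi) ->
  Pr.-integrable setT (EFin \o f).
Proof.
move=> mf hB; apply: (@int_bdd _ _ _ Pr f (`|lo| + `|hi|)) => // x.
have /andP[h1 h2] := hB x.
have := ler_norm lo; have := ler_norm hi; have := ler_normr lo.
rewrite ler_norml; have := normr_ge0 lo; have := normr_ge0 hi.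
have := ler_norm (- lo); rewrite normrN.
lra.
Qed.

Theorem corollary8 (R : realType) (d : measure_display) (T : measurableType d)
    (Pr : probability T R) (theta r : R) (n : nat)
    (p : 'I_n -> T -> R) (Y : T -> R) :
  1 < theta ->
  theta^-1 < r -> r <= (Num.sqrt theta)^-1 ->
  (0 < n)%N ->
  (forall i, measurable_fun setT (p i)) ->
  (forall i w, 1 <= p i w <= theta) ->
  measurable_fun setT Y ->
  (forall w, 1 <= Y w <= theta) ->
  let Pstar := fun w => \big[Num.max/1]_(i < n) p i w in
  let EA := Rintegral Pr setT
              (fun w => A1 theta r [seq p i w | i <- enum 'I_n] (Y w)) in
  let EP := Rintegral Pr setT Pstar in
  let EPdev := Rintegral Pr setT (fun w => Pstar w * `|Pstar w - Y w|) in
  Num.max r ((r * theta)^-1 - beta1 theta r * (EPdev / EP)) <= EA / EP.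
Proof.
move=> h1 hr hrs n0 mp hp mY hY.
cbv zeta.
set Pstar := (fun w : T => \big[Num.max/1]_(i < n) p i w).
set EA := Rintegral Pr setT (fun w => A1 theta r [seq p i w | i <- enum 'I_n] (Y w)).
set EP := Rintegral Pr setT Pstar.
set EPdev := Rintegral Pr setT (fun w => Pstar w * `|Pstar w - Y w|).
have t0 : 0 < theta by apply: lt_trans h1.
have r0 : 0 < r by apply: lt_trans hr; rewrite invr_gt0.
have u1 : 1 < r * theta.
  have := @mulVf _ theta (lt0r_neq0 t0); nra.
have hr2 : r ^+ 2 * theta <= 1.
  have s0 : 0 < Num.sqrt theta by rewrite sqrtr_gt0.
  have hs : r * Num.sqrt theta <= 1.
    by move: hrs; rewrite -div1r ler_pdivlMr.
  have := sqr_sqrtr (ltW t0); rewrite !expr2; nra.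
have hm w : 1 <= Pstar w <= theta.
  apply/andP; split.
    have /andP[+ _] := hp (Ordinal n0) w; move/le_trans; apply.
    exact: (le_bigmax _ (fun i => p i w) (Ordinal n0)).
  apply: bigmax_le; first exact: ltW.
  by move=> i _; have /andP[] := hp i w.
have hcase w : (A1 theta r [seq p i w | i <- enum 'I_n] (Y w) = 1 /\
                  Pstar w < Phi1 theta r (Y w)) \/
               Phi1 theta r (Y w) <= A1 theta r [seq p i w | i <- enum 'I_n] (Y w).
  rewrite /A1.
  case: (tp_cases (Phi1 theta r (Y w)) [seq p i w | i <- enum 'I_n]) => [[ha hall]|[ht _]].
    left; split => //.
    apply: bigmax_lt.
      apply: lt_le_trans u1 _; by rewrite /Phi1 le_max lexx.
    move=> i _; move/allP: hall; apply; apply: map_f; by rewrite mem_enum.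
  by right.
have ha w : 1 <= A1 theta r [seq p i w | i <- enum 'I_n] (Y w) <= theta.
  rewrite /A1.
  case: (tp_cases (Phi1 theta r (Y w)) [seq p i w | i <- enum 'I_n]) => [[-> _]|[_ hin]].
    by rewrite lexx ltW.
  by move/mapP: hin => [i _ ->]; exact: hp.
have hpw w := pw h1 hr hr2 (hm w) (hY w) (hcase w).
have mP : measurable_fun setT Pstar by exact: meas_bigmax.
have mphi : measurable_fun setT (fun w => phi_r theta r (Y w)).
  have -> : (fun w => phi_r theta r (Y w)) =
     cst ((r * theta - 1) / (1 - r)) \+
     (cst ((1 - r ^+ 2 * theta) / (1 - r)) \* (Y \* cst (r * theta)^-1)).
    by apply/funext => w.
  apply: measurable_funD; first exact: measurable_cst.
  apply: measurable_funM; first exact: measurable_cst.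
  apply: measurable_funM => //; exact: measurable_cst.
have mT : measurable_fun setT (fun w => Phi1 theta r (Y w)).
  apply: (measurable_maxr (f := cst (r * theta)) (g := fun w => phi_r theta r (Y w))) => //.
have mA : measurable_fun setT (fun w => A1 theta r [seq p i w | i <- enum 'I_n] (Y w)).
  exact: (@meas_tp _ _ _ _ p (fun w => Phi1 theta r (Y w)) (enum 'I_n)) => //.
have mdev : measurable_fun setT (fun w => Pstar w * `|Pstar w - Y w|).
  apply: measurable_funM => //.
  apply: measurableT_comp => //; exact: measurable_funB.
have hdev w : 0 <= Pstar w * `|Pstar w - Y w| <= theta * theta.
  have /andP[a1 a2] := hm w; have /andP[b1 b2] := hY w.
  have hn : `|Pstar w - Y w| <= theta by rewrite ler_norml; apply/andP; split; lra.
  apply/andP; split; first by apply: mulr_ge0; [lra | exact: normr_ge0].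
  by apply: ler_pM; [lra | exact: normr_ge0 | lra | exact: hn].
have iP : Pr.-integrable setT (EFin \o Pstar).
  by apply: (@int_bdd2 _ _ _ Pr _ (1) (theta)).
have iA : Pr.-integrable setT
    (EFin \o (fun w => A1 theta r [seq p i w | i <- enum 'I_n] (Y w))).
  by apply: (@int_bdd2 _ _ _ Pr _ (1) (theta)).
have iD : Pr.-integrable setT (EFin \o (fun w => Pstar w * `|Pstar w - Y w|)).
  exact: (@int_bdd2 _ _ _ Pr _ 0 (theta * theta) mdev hdev).
have b0 : 0 <= beta1 theta r.
  rewrite /beta1 mulr_ge0 //.
    rewrite divr_ge0 ?subr_ge0 //; apply: ltW; exact: lt_trans u1.
  rewrite le_max; apply/orP; left; rewrite invr_ge0 subr_ge0.
  have : r < 1.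
    rewrite expr2 in hr2; nra.
  exact: ltW.
have EP1 : 1 <= EP.
  have : Rintegral Pr setT (fun _ => 1 : R) <= EP.
    apply: le_Rintegral => //.
      apply: (@int_bdd2 _ _ _ Pr _ (1) (1)); first exact: measurable_cst.
      by move=> x; rewrite lexx.
    by move=> x _; have /andP[] := hm x.
  rewrite Rintegral_cst // mul1r.
  have -> : fine (Pr setT) = 1 by rewrite (probability_setT Pr).
  by [].
have EP0 : 0 < EP by apply: lt_le_trans EP1.
have Hrob : r * EP <= EA.
  rewrite /EP -RintegralZl //; apply: le_Rintegral => //.
    apply: (@int_bdd2 _ _ _ Pr _ (r) (r * theta)).
      by apply: measurable_funM => //; exact: measurable_cst.
    move=> x; have /andP[a1 a2] := hm x; apply/andP; split.
      by rewrite ler_peMr // ltW.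
    by rewrite ler_wpM2l // ltW.
  by move=> x _; have [] := hpw x.
have Hcons : EP / (r * theta) - beta1 theta r * EPdev <= EA.
  rewrite /EP /EPdev -RintegralZl // -RintegralZr // -RintegralB //.
  - apply: le_Rintegral => //.
    + apply: (@int_bdd2 _ _ _ Pr _ (- (beta1 theta r * (theta * theta))) (theta / (r * theta))).
        apply: measurable_funB.
          by apply: measurable_funM => //; exact: measurable_cst.
        by apply: measurable_funM => //; exact: measurable_cst.
      move=> x; have /andP[a1 a2] := hm x; have /andP[c1 c2] := hdev x.
      have e1 : 0 <= Pstar x / (r * theta).
        by apply: divr_ge0; [lra | apply: ltW; apply: lt_trans u1].
      have e2 : Pstar x / (r * theta) <= theta / (r * theta).
        by rewrite ler_pM2r // invr_gt0; apply: lt_trans u1.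
      have e3 : 0 <= beta1 theta r * (Pstar x * `|Pstar x - Y x|) by rewrite mulr_ge0.
      have e4 : beta1 theta r * (Pstar x * `|Pstar x - Y x|) <= beta1 theta r * (theta * theta).
        by rewrite ler_wpM2l.
      rewrite -/(Pstar x); apply/andP; split; lra.
    + by move=> x _; have [] := hpw x.
  - apply: (@int_bdd2 _ _ _ Pr _ (0) (theta / (r * theta))).
      by apply: measurable_funM => //; exact: measurable_cst.
    move=> x; have /andP[a1 a2] := hm x; rewrite -/(Pstar x); apply/andP; split.
      by apply: divr_ge0; [lra | apply: ltW; apply: lt_trans u1].
    by rewrite ler_pM2r // invr_gt0; apply: lt_trans u1.
  - apply: (@int_bdd2 _ _ _ Pr _ (0) (beta1 theta r * (theta * theta))).
      by apply: measurable_funM => //; exact: measurable_cst.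
    move=> x; have /andP[c1 c2] := hdev x; apply/andP; split.
      by rewrite mulr_ge0.
    by rewrite ler_wpM2l.
rewrite ge_max; apply/andP; split.
  by rewrite ler_pdivlMr.
rewrite ler_pdivlMr //.
have -> : ((r * theta)^-1 - beta1 theta r * (EPdev / EP)) * EP =
          EP / (r * theta) - beta1 theta r * EPdev.
  by field; rewrite ?(lt0r_neq0 EP0) ?(lt0r_neq0 r0) ?(lt0r_neq0 t0).
exact: Hcons.
Qed.
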